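(* Let $G$ be a minimal graph in $\mathcal{H}_e(3,3)$. Then for every vertex $v$ of $G$ we have $\alpha(G(v))\le d(v)-3$.
   Context: All graphs are finite, simple and undirected. $\alpha(H)$ is the independence number of $H$, $d(v)$ is the degree of $v$, and $G(v)$ is the subgraph of $G$ induced by the set of neighbors of $v$. Write $G \overset{e}{\rightarrow}(3,3)$ if every coloring of the edges of $G$ with two colors contains a monochromatic triangle; $\mathcal{H}_e(3,3)$ is the class of such graphs. $G$ is a minimal graph in $\mathcal{H}_e(3,3)$ if $G \overset{e}{\rightarrow}(3,3)$ and no proper subgraph $H$ of $G$ satisfies $H \overset{e}{\rightarrow}(3,3)$. *)

(* Defs.v *)
From mathcomp Require Import all_boot.
Set Implicit Arguments. Unset Strict Implicit. Unset Printing Implicit Defensive.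

Definition simple_graph (T : finType) (e : rel T) : Prop :=
  (forall x, ~~ e x x) /\ (forall x y, e x y = e y x).

(* A 2-colouring of the edges: a symmetric function on pairs (its values
   on non-edges are irrelevant). *)
Definition edge_coloring (T : finType) (c : T -> T -> bool) : Prop :=
  forall x y, c x y = c y x.

Definition arrows33 (T : finType) (e : rel T) : Prop :=
  forall c : T -> T -> bool, edge_coloring c ->
    exists x y z, [/\ e x y, e y z & e x z] /\ c x y = c y z /\ c x y = c x z.

Definition subgraph (T : finType) (e : rel T) (V : {set T}) (f : rel T) : Prop :=
  (forall x y, f x y = f y x) /\
  (forall x y, f x y -> e x y) /\
  (forall x y, f x y -> x \in V /\ y \in V).

Definition proper_subgraph (T : finType) (e : rel T) (V : {set T}) (f : rel T) : Prop :=
  subgraph e V f /\ (V != setT \/ exists x y, f x y <> e x y).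

(* Since a triangle of (V, f) only uses edges of f, "(V,f) -e-> (3,3)" is
   arrows33 f. *)
Definition minimal_arrows33 (T : finType) (e : rel T) : Prop :=
  arrows33 e /\ forall V f, proper_subgraph e V f -> ~ arrows33 f.

Definition nbhd (T : finType) (e : rel T) (v : T) : {set T} := [set u | e v u].

Definition deg (T : finType) (e : rel T) (v : T) : nat := #|nbhd e v|.

Definition independent (T : finType) (e : rel T) (S : {set T}) : bool :=
  [forall x in S, forall y in S, ~~ e x y].

Definition alpha_nbhd (T : finType) (e : rel T) (v : T) : nat :=
  \max_(S : {set T} | (S \subset nbhd e v) && independent e S) #|S|.

(* Main.v *)
Require Import Defs.
From mathcomp Require Import all_boot.
From mathcomp Require Import zify.

Lemma three_le (T : finType) (A : {set T}) x y z :
  x \in A -> y \in A -> z \in A -> x != y -> x != z -> y != z -> 2 < #|A|.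
Proof.
move=> xA yA zA xy xz yz.
rewrite (cardD1 x) (cardD1 y [predD1 A & x]) (cardD1 z [predD1 [predD1 A & x] & y]).
by rewrite !inE xA yA zA (eq_sym y x) xy (eq_sym z x) xz (eq_sym z y) yz.
Qed.

Lemma alpha_attained (T : finType) (e : rel T) v :
  exists2 S : {set T}, (S \subset nbhd e v) && independent e S & #|S| = alpha_nbhd e v.
Proof.
rewrite /alpha_nbhd.
have h0 : 0 < #|[pred S : {set T} | (S \subset nbhd e v) && independent e S]|.
  apply/card_gt0P; exists set0; rewrite inE sub0set /=.
  by apply/forallP => x; apply/implyP; rewrite inE.
have [S HS ->] := eq_bigmax_cond (fun S : {set T} => #|S|) h0.
by exists S.
Qed.

Theorem theorem8p6 (T : finType) (e : rel T) :
  simple_graph e -> minimal_arrows33 e ->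
  forall v : T, alpha_nbhd e v + 3 <= deg e v.
Proof.
move=> [irr sym] [arr mini] v.
rewrite leqNgt; apply/negP => Hlt.
have [S /andP [SN Sind] cS] := @alpha_attained T e v.
set B := nbhd e v :\: S.
have cB : #|B| <= 2.
  have := cardsD (nbhd e v) S.
  rewrite (setIidPr SN) -/B cS.
  move: Hlt; rewrite /deg. have := subset_leq_card SN. lia.
have ne_v : forall y, e v y -> y != v.
  by move=> y evy; apply/eqP => yv; move: evy; rewrite yv (negbTE (irr v)).
pose V := [set~ v].
pose f := fun x y => [&& e x y, x != v & y != v].
apply: (mini V f).
  split; last by left; apply/eqP => /setP /(_ v); rewrite !inE eqxx.
  split; first by move=> x y; rewrite /f sym; case: (x != v); case: (y != v); rewrite ?andbT ?andbF.
  split; first by move=> x y /andP [].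
  by move=> x y /and3P [_ xv yv]; rewrite !inE xv yv.
move=> c' Hc'.
pose k := if [pick p : T * T | [&& p.1 \in B, p.2 \in B & e p.1 p.2]] is Some p
          then ~~ c' p.1 p.2 else true.
pose g := fun u => if u \in B then k else ~~ k.
have L : forall x y, e v x -> e v y -> e x y -> ~ (g x = g y /\ g x = c' x y).
  move=> x y evx evy exy [gxy gc].
  have xN : x \in nbhd e v by rewrite inE.
  have yN : y \in nbhd e v by rewrite inE.
  have xy : x != y by apply/eqP => exy'; move: exy; rewrite exy' (negbTE (irr y)).
  case xS : (x \in S); case yS : (y \in S).
  - by move/forallP: Sind => /(_ x) /implyP /(_ xS) /forallP /(_ y) /implyP /(_ yS); rewrite exy.
  - move: gxy; rewrite /g !inE xS yS evx evy /=.
    by case: (k).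
  - move: gxy; rewrite /g !inE xS yS evx evy /=.
    by case: (k).
  have xB : x \in B by rewrite !inE xS evx.
  have yB : y \in B by rewrite !inE yS evy.
  move: gc; rewrite /g xB /k.
  case: pickP => [[p1 p2] /= /and3P [p1B p2B ep] | /(_ (x, y))]; last by rewrite /= xB yB exy.
  have p12 : p1 != p2 by apply/eqP => ep'; move: ep; rewrite ep' (negbTE (irr p2)).
  have p1xy : (p1 == x) || (p1 == y).
    case: eqP => [//|/eqP p1x]; case: eqP => [//|/eqP p1y].
    have a1 : x != p1 by rewrite eq_sym.
    have a2 : y != p1 by rewrite eq_sym.
    by move: (@three_le _ _ _ _ _ xB yB p1B xy a1 a2); rewrite ltnNge cB.
  have p2xy : (p2 == x) || (p2 == y).
    case: eqP => [//|/eqP p2x]; case: eqP => [//|/eqP p2y].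
    have a1 : x != p2 by rewrite eq_sym.
    have a2 : y != p2 by rewrite eq_sym.
    by move: (@three_le _ _ _ _ _ xB yB p2B xy a1 a2); rewrite ltnNge cB.
  have -> : c' p1 p2 = c' x y.
    move: p12; case/orP: p1xy => /eqP ->; case/orP: p2xy => /eqP ->;
      rewrite ?eqxx // => _; exact: Hc'.
  by case: (c' x y).
pose c := fun x y => if x == v then g y else if y == v then g x else c' x y.
have Hc : edge_coloring c.
  move=> x y; rewrite /c.
  case xv: (x == v); case yv: (y == v) => //.
    by rewrite (eqP xv) (eqP yv).
have [x [y [z [[exy eyz exz] [m1 m2]]]]] := arr c Hc.
move: m1 m2; rewrite /c.
case: (eqVneq x v) => [xv|xv].
  subst x; rewrite (negbTE (ne_v _ exy)) (negbTE (ne_v _ exz)) => m1 m2.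
  by exfalso; apply: (L y z exy exz eyz); split; rewrite m1 // -m2.
case: (eqVneq y v) => [yv|yv].
  subst y; rewrite (negbTE (ne_v _ eyz)) => m1 m2.
  by exfalso; apply: (L x z) => //; rewrite sym.
case: (eqVneq z v) => [zv|zv].
  subst z => m1 m2.
  exfalso; apply: (L x y); [by rewrite sym | by rewrite sym | by [] | ].
  by split; rewrite -m2 // -m1.
move=> m1 m2; exists x, y, z; split => //.
by split; rewrite /f ?exy ?eyz ?exz ?xv ?yv ?zv.
Qed.
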